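(* Let $k$ be a field and $\mathsf{E}$ a lower finite $k$-linear category. Then the contramodule forgetful functor $\Theta_\mathsf{E}$ from left $\mathcal{C}_\mathsf{E}$-contramodules to left $\mathsf{E}$-modules is an equivalence of categories.
   Context: A small $k$-linear category $\mathsf{E}$ has $k$-vector spaces $\operatorname{Hom}_\mathsf{E}(x,y)$, $k$-bilinear associative composition and identities with $\mathrm{id}_x\ne0$. A left $\mathsf{E}$-module is a $k$-linear functor $\mathsf{E}\to k\text{-Vect}$. Write $x\preceq y$ if there are $n\ge1$ and objects $x=z_0,\dots,z_n=y$ with $\operatorname{Hom}_\mathsf{E}(z_{i-1},z_i)\neq0$ for all $i$. $\mathsf{E}$ is locally finite if all $\operatorname{Hom}_\mathsf{E}(x,y)$ are finite-dimensional and every $\{z:x\preceq z\preceq y\}$ is finite; it is lower finite if it is locally finite and for every object $y$ the set $\{x: x\preceq y\}$ is finite. $\mathcal{C}_\mathsf{E}=\bigoplus_{x,y}\mathcal{C}^{x,y}$, $\mathcal{C}^{x,y}=\operatorname{Hom}_\mathsf{E}(x,y)^*$; counit zero on $\mathcal{C}^{x,y}$ for $x\ne y$, evaluation at $\mathrm{id}_x$ on $\mathcal{C}^{x,x}$; comultiplication $\mathcal{C}^{x,y}\to\bigoplus_z\mathcal{C}^{x,z}\otimes\mathcal{C}^{z,y}$ dual to composition $g\otimes h\mapsto hg$. A left contramodule over a coalgebra $(\mathcal{C},\mu,\epsilon)$ is a space $\mathfrak{P}$ with $\pi:\operatorname{Hom}_k(\mathcal{C},\mathfrak{P})\to\mathfrak{P}$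 such that $\pi(c\mapsto\epsilon(c)p)=p$ and, under $\operatorname{Hom}_k(\mathcal{C},\operatorname{Hom}_k(\mathcal{C},\mathfrak{P}))\cong\operatorname{Hom}_k(\mathcal{C}\otimes\mathcal{C},\mathfrak{P})$, $f\mapsto(c'\otimes c''\mapsto f(c'')(c'))$, $\pi(c\mapsto\pi(f(c)))=\pi(f\circ\mu)$; morphisms commute with $\pi$. Set $\varphi\cdot p=\pi(c\mapsto\varphi(c)p)$ for $\varphi\in\mathcal{C}^*$. With $e_x$ evaluation at $\mathrm{id}_x$ on $\mathcal{C}^{x,x}$ (zero elsewhere) and $\mathrm{ev}_f$, for $f\in\operatorname{Hom}_\mathsf{E}(x,y)$, evaluation at $f$ on $\mathcal{C}^{x,y}$ (zero elsewhere): $\Theta_\mathsf{E}(\mathfrak{P})(x)=e_x\cdot\mathfrak{P}$ (with $\mathfrak{P}\cong\prod_xe_x\cdot\mathfrak{P}$), $f$ acting by $p\mapsto\mathrm{ev}_f\cdot p$; on morphisms it takes restrictions. *)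

(* Defs.v *)
From HB Require Import structures.
From mathcomp Require Import all_boot all_order all_algebra.
From Stdlib Require Import ClassicalEpsilon ProofIrrelevance FunctionalExtensionality.
Set Implicit Arguments. Unset Strict Implicit. Unset Printing Implicit Defensive.
Import GRing.Theory.
Local Open Scope ring_scope.

Section KCat.
Variable k : fieldType.

Record kcat := KCat {
  Obj : Type;
  Hom : Obj -> Obj -> vectType k;
  comp : forall x y z : Obj, Hom y z -> Hom x y -> Hom x z;
  idm : forall x : Obj, Hom x x;
  comp_linl : forall x y z (g : Hom x y), linear (fun h : Hom y z => comp h g);
  comp_linr : forall x y z (h : Hom y z), linear (fun g : Hom x y => comp h g);
  compA : forall x y z w (f : Hom x y) (g : Hom y z) (h : Hom z w),
      comp h (comp g f) = comp (comp h g) f;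
  comp1m : forall x y (f : Hom x y), comp (idm y) f = f;
  compm1 : forall x y (f : Hom x y), comp f (idm x) = f;
  idm_neq0 : forall x, idm x != 0
}.
End KCat.
Arguments comp {_ _ x y z}.
Arguments idm {_ _}.

Section C.
Variables (k : fieldType) (E : kcat k).
Local Notation Obj := (Obj E).
Local Notation Hom := (@Hom _ E).

Definition C (x y : Obj) : vectType k := 'Hom(Hom x y, k^o).
Definition linfam (P : lmodType k) (F : forall x y : Obj, C x y -> P) :=
  forall x y, linear (F x y).
Definition LinFam (P : lmodType k) := {F : forall x y : Obj, C x y -> P | linfam F}.

Definition delta (x y : Obj) (f : Hom x y) (a b : Obj) : Hom a b :=
  match excluded_middle_informative (x = a) with
  | left ea =>
    match excluded_middle_informative (y = b) with
    | left eb => eq_rect y (fun b => Hom a b) (eq_rect x (fun a => Hom a y) f a ea) b eb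
    | right _ => 0
    end
  | right _ => 0
  end.

Lemma evfam_lin (u : forall a b, Hom a b) : linfam (fun a b (c : C a b) => (c (u a b) : k^o)).
Proof. by move=> a b r c d; rewrite add_lfunE scale_lfunE. Qed.
Definition evfam u : LinFam k^o := exist _ _ (evfam_lin u).

Definition ee (x : Obj) := evfam (delta (idm x)).
Definition evf (x y : Obj) (f : Hom x y) := evfam (delta f).
Definition eps := evfam (fun a b => delta (idm a) a b).

Lemma cdot_lin (P : lmodType k) (phi : LinFam k^o) (p : P) :
  linfam (fun a b c => (sval phi a b c : k) *: p).
Proof.
move=> a b r c d /=; rewrite (proj2_sig phi a b) scalerDl scalerA //.
Qed.
Definition cdot (P : lmodType k) (pi : LinFam P -> P) (phi : LinFam k^o) (p : P) :=
  pi (exist _ _ (cdot_lin phi p)).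
End C.

Section Contra.
Variables (k : fieldType) (E : kcat k).
Local Notation Obj := (Obj E).
Local Notation Hom := (@Hom _ E).
Local Notation C := (@C _ E).

Definition hom_nz (x y : Obj) := exists f : Hom x y, f != 0.
Inductive prec : Obj -> Obj -> Prop :=
| prec_one x y : hom_nz x y -> prec x y
| prec_step x y z : prec x y -> hom_nz y z -> prec x z.

Definition lower_finite :=
  (forall x y, exists s : seq Obj, forall z, prec x z -> prec z y -> List.In z s) /\
  (forall y, exists s : seq Obj, forall x, prec x y -> List.In x s).

Definition interval (x y : Obj) : seq Obj :=
  match excluded_middle_informative (exists s : seq Obj,
      List.NoDup s /\ forall z, List.In z s <-> (prec x z /\ prec z y)) with
  | left H => proj1_sig (constructive_indefinite_description _ H)
  | right _ => [::]
  end.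

Definition bvec (V : vectType k) (i : 'I_(\dim (fullv : {vspace V}))) : V :=
  (vbasis fullv)`_i.
Definition dualb (V : vectType k) (i : 'I_(\dim (fullv : {vspace V}))) : 'Hom(V, k^o) :=
  linfun (fun v : V => (coord (vbasis fullv) i v : k^o)).

Definition fmu (P : lmodType k) (F : forall x y, C x y -> forall a b, C a b -> P)
    (x y : Obj) (phi : C x y) : P :=
  \sum_(z <- interval x y)
    \sum_(i < \dim (fullv : {vspace Hom x z}))
      \sum_(j < \dim (fullv : {vspace Hom z y}))
        (phi (comp (bvec j) (bvec i)) : k) *: F z y (dualb j) x z (dualb i).

Definition is_contra (P : lmodType k) (pi : LinFam E P -> P) :=
  (forall (a : k) (F G : LinFam E P)
      (H : linfam (fun x y c => a *: sval F x y c + sval G x y c)),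
      pi (exist _ _ H) = a *: pi F + pi G) /\
  (forall p : P, cdot pi (eps E) p = p) /\
  (forall (F : forall x y, C x y -> forall a b, C a b -> P)
      (HF1 : forall x y c, linfam (F x y c))
      (HF2 : forall x y a b (c' : C a b), linear (fun c : C x y => F x y c a b c'))
      (H2 : linfam (fun x y c => pi (exist _ _ (HF1 x y c))))
      (H3 : linfam (fmu F)),
      pi (exist _ _ H2) = pi (exist _ _ H3)).

Record contra := Contra {
  cv : lmodType k;
  cpi : LinFam E cv -> cv;
  cax : is_contra cpi
}.

Definition is_cmorph (P Q : contra) (g : cv P -> cv Q) :=
  linear g /\
  forall (F : LinFam E (cv P)) (H : linfam (fun x y c => g (sval F x y c))),
    g (cpi F) = cpi (exist _ _ H).

End Contra.

Section Theta.
Variables (k : fieldType) (E : kcat k).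
Local Notation Obj := (Obj E).
Local Notation Hom := (@Hom _ E).

Record kmod := KMod {
  Mv : Obj -> lmodType k;
  mact : forall x y : Obj, Hom x y -> Mv x -> Mv y
}.

Definition is_kmod (M : kmod) :=
  (forall x y (m : Mv M x), linear (fun f : Hom x y => mact f m)) /\
  (forall x y (f : Hom x y), linear (@mact M x y f)) /\
  (forall x (m : Mv M x), mact (idm x) m = m) /\
  (forall x y z (g : Hom x y) (h : Hom y z) (m : Mv M x),
      mact (comp h g) m = mact h (mact g m)).

Definition is_kmorph (M N : kmod) (eta : forall x, Mv M x -> Mv N x) :=
  (forall x, linear (eta x)) /\
  (forall x y (f : Hom x y) (m : Mv M x), eta y (mact f m) = mact f (eta x m)).

Variable P : contra E.

Definition thetaS (x : Obj) : pred (cv P) := fun p =>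
  if excluded_middle_informative (exists q, p = cdot (@cpi _ _ P) (ee x) q)
  then true else false.

Lemma cdot_linear (phi : LinFam E k^o) : linear (cdot (@cpi _ _ P) phi).
Proof.
move=> a p q; rewrite /cdot.
have [Hlin _] := cax P.
set F := exist _ _ (cdot_lin phi p); set G := exist _ _ (cdot_lin phi q).
have H : linfam (fun x y c => a *: sval F x y c + sval G x y c).
  move=> x y r c d /=. rewrite (proj2_sig phi x y).
  set u := sval phi x y c; set v := sval phi x y d.
  have -> : r *: u + v = r * (u : k) + (v : k) by [].
  rewrite !scalerDl !scalerDr !scalerA mulrA (mulrC a r) addrACA //.
rewrite -(Hlin a F G H); congr cpi; apply: eq_exist_uncurried.
have e : (fun (a0 b : Obj) (c : @C _ E a0 b) => (sval phi a0 b c : k) *: (a *: p + q)) =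
         (fun x y c => a *: sval F x y c + sval G x y c).
  do 3 (apply: functional_extensionality_dep => ?).
  by rewrite /= scalerDr !scalerA mulrC.
exists e; exact: proof_irrelevance.
Qed.

Lemma thetaSP x p :
  reflect (exists q, p = cdot (@cpi _ _ P) (ee x) q) (p \in thetaS x).
Proof.
rewrite unfold_in /thetaS; case: excluded_middle_informative => h.
  by left. by right.
Qed.

Lemma thetaS_closed x : subsemimod_closed (thetaS x).
Proof.
have L := cdot_linear (ee x).
have Z : cdot (@cpi _ _ P) (ee x) 0 = 0.
  have := L (-1) 0 0; rewrite scaler0 addr0 scaleN1r addNr //.
split; [split|].
- by apply/thetaSP; exists 0; rewrite Z.
- move=> u v /thetaSP [qu ->] /thetaSP [qv ->]; apply/thetaSP; exists (qu + qv).
  by have := L 1 qu qv; rewrite !scale1r.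
- move=> a u /thetaSP [qu ->]; apply/thetaSP; exists (a *: qu).
  by have := L a qu 0; rewrite Z !addr0.
Qed.

HB.instance Definition _ x :=
  GRing.isSubmodClosed.Build k (cv P) (thetaS x) (thetaS_closed x).

Definition ThetaT (x : Obj) := {p : cv P | thetaS x p}.
HB.instance Definition _ x := [isSub of ThetaT x for @sval _ _].
HB.instance Definition _ x := [Choice of ThetaT x by <:].
HB.instance Definition _ x := [SubChoice_isSubLmodule of ThetaT x by <:].

Definition ThetaMod : kmod :=
  @KMod ThetaT (fun x y (f : Hom x y) (p : ThetaT x) =>
                  insubd (0 : ThetaT y) (cdot (@cpi _ _ P) (evf f) (val p))).
End Theta.

Section Equiv.
Variables (k : fieldType) (E : kcat k).

Definition Theta_mor (P Q : contra E) (g : cv P -> cv Q) :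
    forall x, ThetaT P x -> ThetaT Q x :=
  fun x p => insubd (0 : ThetaT Q x) (g (val p)).

Definition Theta_is_functor :=
  (forall P : contra E, is_kmod (ThetaMod P)) /\
  (forall (P Q : contra E) (g : cv P -> cv Q), is_cmorph g ->
      @is_kmorph _ _ (ThetaMod P) (ThetaMod Q) (Theta_mor g)) /\
  (forall (P : contra E) x (p : ThetaT P x), Theta_mor (@id (cv P)) p = p) /\
  (forall (P Q R : contra E) (g : cv P -> cv Q) (h : cv Q -> cv R),
      is_cmorph g -> is_cmorph h ->
      forall x (p : ThetaT P x), Theta_mor (h \o g) p = Theta_mor h (Theta_mor g p)).

Definition Theta_faithful :=
  forall (P Q : contra E) (g1 g2 : cv P -> cv Q), is_cmorph g1 -> is_cmorph g2 ->
    (forall x (p : ThetaT P x), Theta_mor g1 p = Theta_mor g2 p) ->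
    forall p, g1 p = g2 p.

Definition Theta_full :=
  forall (P Q : contra E) (eta : forall x, ThetaT P x -> ThetaT Q x),
    @is_kmorph _ _ (ThetaMod P) (ThetaMod Q) eta ->
    exists g : cv P -> cv Q, is_cmorph g /\ forall x (p : ThetaT P x), Theta_mor g p = eta x p.

Definition Theta_ess_surj :=
  forall M : kmod E, is_kmod M ->
    exists (P : contra E) (eta : forall x, ThetaT P x -> Mv M x)
           (zeta : forall x, Mv M x -> ThetaT P x),
      @is_kmorph _ _ (ThetaMod P) M eta /\ @is_kmorph _ _ M (ThetaMod P) zeta /\
      (forall x p, zeta x (eta x p) = p) /\ (forall x m, eta x (zeta x m) = m).

Definition Theta_equivalence :=
  Theta_is_functor /\ Theta_faithful /\ Theta_full /\ Theta_ess_surj.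
End Equiv.

(* Main.v *)
From HB Require Import structures.
From mathcomp Require Import all_boot all_order all_algebra.
Require Import Defs.
From Stdlib Require Import ClassicalEpsilon ProofIrrelevance FunctionalExtensionality Classical.
From mathcomp Require boolp.
Set Implicit Arguments. Unset Strict Implicit. Unset Printing Implicit Defensive.
Import GRing.Theory.
Local Open Scope ring_scope.

Section LinH.
Variables (R : pzRingType) (U V : lmodType R) (f : U -> V) (Hf : linear f).
Lemma lin0 : f 0 = 0.
Proof.
have := Hf 1 0 0; rewrite scaler0 addr0 scale1r => /esym/eqP.
by rewrite -subr_eq0 addrK => /eqP.
Qed.
Lemma linD u v : f (u + v) = f u + f v.
Proof. by have := Hf 1 u v; rewrite !scale1r. Qed.
Lemma linZ a u : f (a *: u) = a *: f u.
Proof. by have := Hf a u 0; rewrite !addr0 lin0 addr0. Qed.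
Lemma lin_sum (I : Type) (r : seq I) (F : I -> U) :
  f (\sum_(i <- r) F i) = \sum_(i <- r) f (F i).
Proof.
elim: r => [|i r IH]; first by rewrite !big_nil lin0.
by rewrite !big_cons linD IH.
Qed.
End LinH.



Lemma sum_zero (T : Type) (V : nmodType) (r : seq T) (F : T -> V) :
  (forall z, List.In z r -> F z = 0) -> \sum_(z <- r) F z = 0.
Proof.
elim: r => [|a r IH] H; first by rewrite big_nil.
by rewrite big_cons H /= ?IH ?addr0 //; [move=> z Hz; apply: H; right| left].
Qed.

Lemma sum_single (T : Type) (V : nmodType) (r : seq T) (z0 : T) (F : T -> V) :
  List.NoDup r -> List.In z0 r -> (forall z, z <> z0 -> F z = 0) ->
  \sum_(z <- r) F z = F z0.
Proof.
elim: r => [|a r IH] //= ND Hin H0; rewrite big_cons.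
inversion ND; subst.
case: (classic (a = z0)) => [ea|na].
  subst; rewrite sum_zero ?addr0 // => z Hz; apply: H0 => ez; subst; auto.
rewrite H0 // add0r IH //; by case: Hin.
Qed.

Lemma nodup_exists (T : Type) (Q : T -> Prop) (s : seq T) :
  (forall z, Q z -> List.In z s) ->
  exists s', List.NoDup s' /\ forall z, List.In z s' <-> Q z.
Proof.
elim: s Q => [|a s IH] Q H.
  by exists [::]; split; [constructor|move=> z; split=> // /H].
have [s' [ND Hs']] : exists s', List.NoDup s' /\ forall z, List.In z s' <-> (Q z /\ z <> a).
  apply: IH => z [Qz nz]; case: (H z Qz) => // e; by case: nz.
case: (classic (Q a)) => Qa.
  exists (a :: s'); split.
    constructor => // /Hs' [] _; by [].
  move=> z; split => /=.
    by case=> [<-|/Hs'[]].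
  move=> Qz; case: (classic (z = a)) => [->|nz]; [by left|right; exact/Hs'].
exists s'; split => // z; split; first by case/Hs'.
by move=> Qz; apply/Hs'; split => // ez; subst.
Qed.

Section Basic.
Variables (k : fieldType) (E : kcat k).
Local Notation Obj := (Obj E).
Local Notation Hom := (@Defs.Hom _ E).
Local Notation C := (@Defs.C _ E).

Lemma comp0l x y z (g : Hom x y) : comp (0 : Hom y z) g = 0.
Proof. exact: (lin0 (@comp_linl _ E x y z g)). Qed.
Lemma comp0r x y z (h : Hom y z) : comp h (0 : Hom x y) = 0.
Proof. exact: (lin0 (@comp_linr _ E x y z h)). Qed.
Lemma compDl x y z (g : Hom x y) (h1 h2 : Hom y z) : comp (h1 + h2) g = comp h1 g + comp h2 g.
Proof. exact: (linD (@comp_linl _ E x y z g)). Qed.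
Lemma compZl x y z (g : Hom x y) a (h : Hom y z) : comp (a *: h) g = a *: comp h g.
Proof. exact: (linZ (@comp_linl _ E x y z g)). Qed.
Lemma compDr x y z (h : Hom y z) (g1 g2 : Hom x y) : comp h (g1 + g2) = comp h g1 + comp h g2.
Proof. exact: (linD (@comp_linr _ E x y z h)). Qed.
Lemma compZr x y z (h : Hom y z) a (g : Hom x y) : comp h (a *: g) = a *: comp h g.
Proof. exact: (linZ (@comp_linr _ E x y z h)). Qed.
Lemma comp_suml x y z (g : Hom x y) (I : Type) (r : seq I) (F : I -> Hom y z) :
  comp (\sum_(i <- r) F i) g = \sum_(i <- r) comp (F i) g.
Proof. exact: (lin_sum (@comp_linl _ E x y z g)). Qed.
Lemma comp_sumr x y z (h : Hom y z) (I : Type) (r : seq I) (F : I -> Hom x y) :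
  comp h (\sum_(i <- r) F i) = \sum_(i <- r) comp h (F i).
Proof. exact: (lin_sum (@comp_linr _ E x y z h)). Qed.

Lemma deltaE x y (f : Hom x y) : delta f x y = f.
Proof.
rewrite /delta; case: excluded_middle_informative => [ea|[]] //.
case: excluded_middle_informative => [eb|[]] //.
by rewrite (proof_irrelevance _ ea erefl) (proof_irrelevance _ eb erefl).
Qed.

Lemma delta0l x y (f : Hom x y) a b : x <> a -> delta f a b = 0.
Proof. by rewrite /delta; case: excluded_middle_informative. Qed.
Lemma delta0r x y (f : Hom x y) a b : y <> b -> delta f a b = 0.
Proof.
rewrite /delta; case: excluded_middle_informative => // ea.
by case: excluded_middle_informative.
Qed.

Lemma delta_lin x y a b : linear (fun f : Hom x y => delta f a b).
Proof.
move=> r f g /=.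
case: (classic (x = a)) => [ea|na]; last by rewrite !(delta0l _ _ na) scaler0 addr0.
case: (classic (y = b)) => [eb|nb]; last by rewrite !(delta0r _ _ nb) scaler0 addr0.
by subst; rewrite !deltaE.
Qed.

Lemma delta_zero x y a b : delta (0 : Hom x y) a b = 0.
Proof. exact: (lin0 (@delta_lin x y a b)). Qed.

Lemma dualbE (V : vectType k) i (v : V) : dualb i v = coord (vbasis fullv) i v.
Proof. by rewrite /dualb lfunE. Qed.

Lemma bexp (V : vectType k) (v : V) : v = \sum_i (dualb i v : k) *: bvec i.
Proof.
rewrite {1}(coord_vbasis (memvf v)); apply: eq_bigr => i _.
by rewrite dualbE.
Qed.

Lemma dexp (V : vectType k) (phi : 'Hom(V, k^o)) : phi = \sum_i (phi (bvec i) : k) *: dualb i.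
Proof.
apply/lfunP => v; rewrite sum_lfunE {1}(bexp v) linear_sum.
apply: eq_bigr => i _; rewrite linearZ scale_lfunE /=.
by rewrite [RHS]mulrC.
Qed.

Lemma C_triv a b (phi : C a b) : ~ hom_nz a b -> phi = 0.
Proof.
move=> H; apply/lfunP => v; rewrite zero_lfunE.
have -> : v = 0 by apply: NNPP => nv; apply: H; exists v; apply/eqP.
by rewrite linear0.
Qed.

Lemma prec_refl (x : Obj) : prec x x.
Proof. by apply: prec_one; exists (idm x); exact: idm_neq0. Qed.

Lemma prec_trans (x y z : Obj) : prec x y -> prec y z -> prec x z.
Proof.
move=> Hxy Hyz; elim: Hyz Hxy => [a b H|a b c _ IH H] Hxa.
  exact: prec_step Hxa H.
exact: prec_step (IH Hxa) H.
Qed.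

Lemma hom_prec x y (f : Hom x y) : f != 0 -> prec x y.
Proof. by move=> nf; apply: prec_one; exists f. Qed.

Hypothesis LF : lower_finite E.

Lemma interval_spec (x y : Obj) : List.NoDup (interval x y) /\
  forall z, List.In z (interval x y) <-> (prec x z /\ prec z y).
Proof.
rewrite /interval; case: excluded_middle_informative => [H|H].
  by case: (constructive_indefinite_description _ H).
exfalso; apply: H; have [s Hs] := LF.1 x y.
by apply: nodup_exists => z [] /Hs; apply.
Qed.

Definition predl (y : Obj) : seq Obj :=
  proj1_sig (constructive_indefinite_description _
   (nodup_exists (Q := fun x => prec x y) (s := proj1_sig (constructive_indefinite_description _ (LF.2 y)))
     (proj2_sig (constructive_indefinite_description _ (LF.2 y))))).

Lemma predl_spec (y : Obj) : List.NoDup (predl y) /\ forall x, List.In x (predl y) <-> prec x y.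
Proof. rewrite /predl; by case: constructive_indefinite_description. Qed.

Lemma delta_comp x0 z0 y0 (g : Hom x0 z0) (h : Hom z0 y0) a b :
  \sum_(z <- interval a b) comp (delta h z b) (delta g a z) = delta (comp h g) a b.
Proof.
case: (classic (x0 = a)) => [ea|na]; last first.
  rewrite (delta0l _ _ na) sum_zero // => z _; by rewrite (delta0l _ _ na) comp0r.
case: (classic (y0 = b)) => [eb|nb]; last first.
  rewrite (delta0r _ _ nb) sum_zero // => z _; by rewrite (delta0r _ _ nb) comp0l.
rewrite -ea -eb deltaE.
case: (classic (g = 0)) => [g0|/eqP ng].
  by subst; rewrite comp0r sum_zero // => z _; rewrite delta_zero comp0r.
case: (classic (h = 0)) => [h0|/eqP nh].
  by subst; rewrite comp0l sum_zero // => z _; rewrite delta_zero comp0l.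
have [ND Hin] := interval_spec x0 y0.
rewrite (sum_single (z0 := z0)) ?deltaE //.
  by apply/Hin; split; [exact: hom_prec ng|exact: hom_prec nh].
by move=> z nz; rewrite (delta0r _ _ (nesym nz)) comp0r.
Qed.

Lemma delta_eps (a b : Obj) :
  \sum_(z <- interval a b) comp (delta (idm z) z b) (delta (idm z) a z) = delta (idm a) a b.
Proof.
case: (classic (a = b)) => [eab|nab]; last first.
  rewrite (delta0r _ _ nab) sum_zero // => z _.
  case: (classic (z = b)) => [ezb|nzb]; last by rewrite (delta0r _ _ nzb) comp0l.
  by rewrite ezb (delta0l _ _ (nesym nab)) comp0r.
rewrite -eab deltaE.
have [ND Hin] := interval_spec a a.
rewrite (sum_single (z0 := a)) ?deltaE ?comp1m //.
  by apply/Hin; split; exact: prec_refl.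
by move=> z nz; rewrite (delta0l _ _ nz) comp0r.
Qed.

End Basic.

Section Contra1.
Variables (k : fieldType) (E : kcat k).
Local Notation Obj := (Obj E).
Local Notation Hom := (@Defs.Hom _ E).
Local Notation C := (@Defs.C _ E).
Variable P : contra E.
Local Notation V := (cv P).
Local Notation Fam := (forall x y : Obj, C x y -> V).

Definition PI (f : Fam) : V :=
  match excluded_middle_informative (linfam f) with
  | left H => cpi (exist _ f H)
  | right _ => 0 end.

Lemma PIE (f : Fam) (H : linfam f) : PI f = cpi (exist _ f H).
Proof.
rewrite /PI; case: excluded_middle_informative => [H'|[]] //.
by rewrite (proof_irrelevance _ H H').
Qed.

Lemma cpiE (F : LinFam E V) : cpi F = PI (sval F).
Proof. by case: F => f H; rewrite (PIE H). Qed.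

Lemma PI_ext (f g : Fam) : (forall x y c, f x y c = g x y c) -> PI f = PI g.
Proof.
move=> H; have -> // : f = g.
by do 3 (apply: functional_extensionality_dep => ?); apply: H.
Qed.

Lemma linfam0 : linfam (fun x y (c : C x y) => (0 : V)).
Proof. by move=> x y r c d; rewrite scaler0 addr0. Qed.

Lemma linfamD (f g : Fam) a : linfam f -> linfam g ->
  linfam (fun x y c => a *: f x y c + g x y c).
Proof.
move=> Hf Hg x y r c d /=; rewrite (Hf x y) (Hg x y).
by rewrite !scalerDr !scalerA (mulrC r a) addrACA.
Qed.

Lemma linfamS (I : Type) (r : seq I) (F : I -> Fam) : (forall i, linfam (F i)) ->
  linfam (fun x y c => \sum_(i <- r) F i x y c).
Proof.
move=> H; elim: r => [|i r IH]; first by move=> x y a c d; rewrite !big_nil scaler0 addr0.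
move=> x y a c d; rewrite !big_cons (H i x y) (IH x y) scalerDr.
by rewrite -!addrA; congr (_ + _); rewrite addrCA.
Qed.

Lemma linfam_ev (u : forall x y, Hom x y) (q : Obj -> Obj -> V) :
  linfam (fun x y (c : C x y) => (c (u x y) : k) *: q x y).
Proof.
by move=> x y r c d; rewrite add_lfunE scale_lfunE scalerDl scalerA.
Qed.

Lemma linfam_lin (phi : forall x y, C x y -> k^o) (q : Obj -> Obj -> V) :
  (forall x y, linear (phi x y)) ->
  linfam (fun x y (c : C x y) => (phi x y c : k) *: q x y).
Proof.
by move=> H x y r c d; rewrite (H x y) scalerDl scalerA.
Qed.

Lemma PI_lin (f g : Fam) a : linfam f -> linfam g ->
  PI (fun x y c => a *: f x y c + g x y c) = a *: PI f + PI g.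
Proof.
move=> Hf Hg; have [L _] := cax P.
rewrite (PIE (linfamD a Hf Hg)) (PIE Hf) (PIE Hg).
exact: (L a (exist _ f Hf) (exist _ g Hg)).
Qed.

Lemma PI0 : PI (fun x y c => 0) = 0.
Proof.
have H := PI_lin 1 linfam0 linfam0.
have E0 : PI (fun x y c => 1 *: (0:V) + 0) = PI (fun x y c => 0).
  by apply: PI_ext => *; rewrite scaler0 addr0.
rewrite E0 scale1r in H; move/esym/eqP: H.
by rewrite -subr_eq0 addrK => /eqP.
Qed.

Lemma PI_D (f g : Fam) : linfam f -> linfam g ->
  PI (fun x y c => f x y c + g x y c) = PI f + PI g.
Proof.
move=> Hf Hg; rewrite -[PI f]scale1r -PI_lin //; apply: PI_ext => *; by rewrite scale1r.
Qed.

Lemma PI_Z (f : Fam) a : linfam f -> PI (fun x y c => a *: f x y c) = a *: PI f.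
Proof.
move=> Hf; rewrite -[RHS]addr0 -PI0 -PI_lin //; last exact: linfam0.
by apply: PI_ext => *; rewrite addr0.
Qed.

Lemma PI_sum (I : Type) (r : seq I) (F : I -> Fam) : (forall i, linfam (F i)) ->
  PI (fun x y c => \sum_(i <- r) F i x y c) = \sum_(i <- r) PI (F i).
Proof.
move=> H; elim: r => [|i r IH].
  rewrite big_nil -[RHS]PI0; apply: PI_ext => x y c; by rewrite big_nil.
rewrite big_cons -IH -PI_D //; last exact: linfamS.
by apply: PI_ext => *; rewrite big_cons.
Qed.

Lemma cdotE (phi : LinFam E k^o) (p : V) :
  cdot (@cpi _ _ P) phi p = PI (fun a b c => (sval phi a b c : k) *: p).
Proof. by rewrite /cdot cpiE. Qed.

Lemma PI_counit (p : V) : PI (fun a b (c : C a b) => (c (delta (idm a) a b) : k) *: p) = p.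
Proof. by have [_ [U _]] := cax P; rewrite -{2}(U p) cdotE. Qed.

Lemma fmu_lin (F : forall x y, C x y -> forall a b, C a b -> V) : linfam (fmu F).
Proof.
move=> x y r c d; rewrite /fmu scaler_sumr -big_split; apply: eq_bigr => z _.
rewrite scaler_sumr -big_split; apply: eq_bigr => i _.
rewrite scaler_sumr -big_split; apply: eq_bigr => j _.
by rewrite add_lfunE scale_lfunE scalerDl scalerA.
Qed.

Lemma PI_assoc (F : forall x y, C x y -> forall a b, C a b -> V)
    (HF1 : forall x y c, linfam (F x y c))
    (HF2 : forall x y a b (c' : C a b), linear (fun c : C x y => F x y c a b c')) :
  PI (fun x y c => PI (F x y c)) = PI (fmu F).
Proof.
have [_ [_ A]] := cax P.
have H2 : linfam (fun x y c => PI (F x y c)).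
  move=> x y r c d /=; rewrite -PI_lin //.
  by apply: PI_ext => a b c'; rewrite (HF2 x y a b c').
have E1 : PI (fun x y c => PI (F x y c)) = PI (fun x y c => cpi (exist _ _ (HF1 x y c))).
  by apply: PI_ext => x y c; rewrite (PIE (HF1 x y c)).
have H2' : linfam (fun x y c => cpi (exist _ _ (HF1 x y c))).
  by move=> x y r c d; have := H2 x y r c d; rewrite !(PIE (HF1 _ _ _)).
by rewrite E1 (PIE H2') (A F HF1 HF2 H2' (fmu_lin F)) -PIE.
Qed.

Definition compL (a z b : Obj) (h : Hom z b) : {linear Hom a z -> Hom a b} :=
  HB.pack (fun g : Hom a z => comp h g)
    (GRing.isLinear.Build k (Hom a z) (Hom a b) *:%R (fun g => comp h g) (@comp_linr _ E a z b h)).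

Definition precomp (a z b : Obj) (phi : C a b) (h : Hom z b) : C a z :=
  (phi \o linfun (compL a h))%VF.

Lemma precompE (a z b : Obj) (phi : C a b) (h : Hom z b) (w : Hom a z) :
  precomp phi h w = phi (comp h w).
Proof. by rewrite /precomp comp_lfunE lfunE. Qed.

Lemma PI_master (u : forall x y, Hom x y) (G : forall x y a b, C a b -> V)
    (HG : forall x y, linfam (G x y)) :
  PI (fun x y c => (c (u x y) : k) *: PI (G x y)) =
  PI (fun a b phi => \sum_(z <- interval a b) G z b a z (precomp phi (u z b))).
Proof.
pose F := fun x y (c : C x y) a b (c' : C a b) => (c (u x y) : k) *: G x y a b c'.
have HF1 : forall x y c, linfam (F x y c).
  move=> x y c a b r d e; rewrite /F (HG x y) scalerDr !scalerA mulrC //.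
have HF2 : forall x y a b (c' : C a b), linear (fun c : C x y => F x y c a b c').
  move=> x y a b c' r c d; rewrite /F add_lfunE scale_lfunE scalerDl scalerA //.
have := PI_assoc HF1 HF2.
rewrite (PI_ext (f := fun x y c => PI (F x y c)) (g := fun x y c => (c (u x y) : k) *: PI (G x y))); last first.
  by move=> x y c; rewrite /F PI_Z.
move=> ->; apply: PI_ext => a b phi; rewrite /fmu; apply: eq_bigr => z _.
rewrite {1}(dexp (precomp phi (u z b))) (lin_sum (HG z b a z)); apply: eq_bigr => i _.
rewrite (linZ (HG z b a z)) precompE.
under eq_bigr do rewrite /F scalerA.
rewrite -scaler_suml; congr (_ *: _).
rewrite {2}(bexp (u z b)) comp_suml linear_sum; apply: eq_bigr => j _.
by rewrite compZl linearZ /= mulrC.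
Qed.

Definition EV (u : forall x y, Hom x y) (p : V) : V :=
  PI (fun a b (c : C a b) => (c (u a b) : k) *: p).

Lemma precomp_id (a b : Obj) (phi : C a b) : precomp phi (idm b) = phi.
Proof. by apply/lfunP => w; rewrite precompE comp1m. Qed.

Lemma precomp0 (a z b : Obj) (phi : C a b) : precomp phi (0 : Hom z b) = 0.
Proof. by apply/lfunP => w; rewrite precompE comp0l linear0 zero_lfunE. Qed.

Lemma precomp_0 (a z b : Obj) (h : Hom z b) : precomp (0 : C a b) h = 0.
Proof. by apply/lfunP => w; rewrite precompE !zero_lfunE. Qed.

Lemma EV_ext (u1 u2 : forall x y, Hom x y) p : (forall a b, u1 a b = u2 a b) -> EV u1 p = EV u2 p.
Proof. by move=> H; apply: PI_ext => a b c; rewrite H. Qed.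

Lemma EV_lin u : linear (EV u).
Proof.
move=> r p q; rewrite /EV -PI_lin; try exact: linfam_ev.
by apply: PI_ext => a b c; rewrite scalerDr !scalerA mulrC.
Qed.

Lemma EV_linu (u1 u2 : forall x y, Hom x y) r p :
  EV (fun a b => r *: u1 a b + u2 a b) p = r *: EV u1 p + EV u2 p.
Proof.
rewrite /EV -PI_lin; try exact: linfam_ev.
by apply: PI_ext => a b c; rewrite linearD linearZ /= scalerDl scalerA.
Qed.

Lemma EV0u p : EV (fun a b => 0) p = 0.
Proof. by rewrite -PI0; apply: PI_ext => a b c; rewrite linear0 scale0r. Qed.

Lemma EV_counit p : EV (fun a b => delta (idm a) a b) p = p.
Proof. exact: PI_counit. Qed.

Lemma EV_compose_gen (u : forall x y, Hom x y) (v : forall x y a b, Hom a b) p :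
  PI (fun x y c => (c (u x y) : k) *: EV (v x y) p) =
  EV (fun a b => \sum_(z <- interval a b) comp (u z b) (v z b a z)) p.
Proof.
rewrite /EV (PI_master u (G := fun x y a b (c : C a b) => (c (v x y a b) : k) *: p)); last first.
  by move=> x y; exact: linfam_ev.
apply: PI_ext => a b phi; rewrite linear_sum scaler_suml; apply: eq_bigr => z _.
by rewrite precompE.
Qed.

Lemma EV_compose (u v : forall x y, Hom x y) p :
  EV u (EV v p) = EV (fun a b => \sum_(z <- interval a b) comp (u z b) (v a z)) p.
Proof. exact: (EV_compose_gen u (fun _ _ => v)). Qed.

Hypothesis LF : lower_finite E.

Lemma EV_comp_delta (x0 z0 y0 : Obj) (g : Hom x0 z0) (h : Hom z0 y0) q :
  EV (delta h) (EV (delta g) q) = EV (delta (comp h g)) q.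
Proof. by rewrite EV_compose; apply: EV_ext => a b; rewrite delta_comp. Qed.

Lemma EV_comp_delta0 (x0 z0 z1 y1 : Obj) (g : Hom x0 z0) (h : Hom z1 y1) q :
  z0 <> z1 -> EV (delta h) (EV (delta g) q) = 0.
Proof.
move=> nz; rewrite EV_compose -(EV0u q); apply: EV_ext => a b.
apply: sum_zero => z _.
case: (classic (z0 = z)) => [ez|nz0]; last by rewrite (delta0r _ _ nz0) comp0r.
by subst; rewrite (delta0l _ _ (nesym nz)) comp0l.
Qed.

Lemma PI_decomp p : PI (fun x y c => (c (delta (idm x) x y) : k) *: EV (delta (idm x)) p) = p.
Proof.
rewrite (EV_compose_gen (fun x y => delta (idm x) x y) (fun x y => delta (idm x))).
rewrite -{2}(EV_counit p); apply: EV_ext => a b; exact: delta_eps.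
Qed.

Lemma PI_restrict (F : Fam) (HF : linfam F) (w : Obj) :
  EV (delta (idm w)) (PI F) =
  \sum_(a <- predl LF w) \sum_(i < \dim (fullv : {vspace Hom a w}))
     EV (delta (bvec i : Hom a w)) (F a w (dualb i)).
Proof.
rewrite {1}/EV (PI_master (delta (idm w)) (G := fun _ _ => F) (fun _ _ => HF)).
have E1 : forall a, \sum_(i < \dim (fullv : {vspace Hom a w})) EV (delta (bvec i : Hom a w)) (F a w (dualb i))
  = PI (fun a' b (c : C a' b) => \sum_(i < \dim (fullv : {vspace Hom a w}))
         (c (delta (bvec i : Hom a w) a' b) : k) *: F a w (dualb i)).
  by move=> a; rewrite PI_sum //; move=> i; exact: linfam_ev.
under eq_bigr do rewrite E1.
rewrite -PI_sum; last by move=> a; apply: linfamS => i; exact: linfam_ev.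
apply: PI_ext => a' b phi.
case: (classic (w = b)) => [eb|nb]; last first.
  rewrite sum_zero; last by move=> z _; rewrite (delta0r _ _ nb) precomp0 (lin0 (HF _ _)).
  rewrite sum_zero // => a _; apply: sum_zero => i _ /=.
  by rewrite (delta0r _ _ nb) linear0 scale0r.
subst b.
case: (classic (prec a' w)) => [Hp|Hnp]; last first.
  have phi0 : phi = 0 by apply: C_triv => H; apply: Hnp; exact: prec_one.
  subst phi; rewrite sum_zero; last by move=> z _; rewrite precomp_0 (lin0 (HF _ _)).
  rewrite sum_zero // => a _; apply: sum_zero => i _ /=.
  by rewrite zero_lfunE scale0r.
have [NDi Hi] := interval_spec LF a' w.
rewrite (sum_single (z0 := w)) //; last first.
    by move=> z nz; rewrite (delta0l _ _ (nesym nz)) precomp0 (lin0 (HF _ _)).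
  by apply/Hi; split => //; exact: prec_refl.
have [NDp Hpr] := predl_spec LF w.
rewrite (sum_single (z0 := a')) //; last first.
    move=> a na; apply: sum_zero => i _ /=.
    by rewrite (delta0l _ _ na) linear0 scale0r.
  exact/Hpr.
rewrite deltaE precomp_id {1}(dexp phi) (lin_sum (HF a' w)).
apply: eq_bigr => i _; by rewrite (linZ (HF a' w)) deltaE.
Qed.

Lemma EV_diag (w : Obj -> Obj -> V) (a : Obj) :
  EV (delta (idm a)) (PI (fun x y (c : C x y) => (c (delta (idm x) x y) : k) *: w x y)) =
  EV (delta (idm a)) (w a a).
Proof.
rewrite {1}/EV (PI_master (delta (idm a)) (G := fun _ _ x y (c : C x y) => (c (delta (idm x) x y) : k) *: w x y)); last first.
  move=> _ _; exact: linfam_ev.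
apply: PI_ext => a' b phi.
case: (classic (prec a' b)) => [Hp|Hnp]; last first.
  have phi0 : phi = 0 by apply: C_triv => H; apply: Hnp; exact: prec_one.
  subst phi; rewrite zero_lfunE scale0r sum_zero // => z _.
  by rewrite precomp_0 zero_lfunE scale0r.
have [NDi Hi] := interval_spec LF a' b.
rewrite (sum_single (z0 := a')) //; last first.
    by move=> z nz; rewrite (delta0r _ _ (nesym nz)) linear0 scale0r.
  by apply/Hi; split => //; exact: prec_refl.
rewrite deltaE precompE compm1.
case: (classic (a = a')) => [ea|na]; first by subst.
by rewrite (delta0l _ _ na) linear0 !scale0r.
Qed.

End Contra1.

Section ThetaProps.
Variables (k : fieldType) (E : kcat k).
Local Notation Obj := (Obj E).
Local Notation Hom := (@Defs.Hom _ E).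
Local Notation C := (@Defs.C _ E).
Hypothesis LF : lower_finite E.

Lemma cdot_ee (P : contra E) x q : cdot (@cpi _ _ P) (ee x) q = @EV _ _ P (delta (idm x)) q.
Proof. exact: cdotE. Qed.

Lemma cdot_evf (P : contra E) x y (f : Hom x y) q : cdot (@cpi _ _ P) (evf f) q = @EV _ _ P (delta f) q.
Proof. exact: cdotE. Qed.

Lemma EV_idem (P : contra E) x q :
  @EV _ _ P (delta (idm x)) (@EV _ _ P (delta (idm x)) q) = @EV _ _ P (delta (idm x)) q.
Proof. by rewrite (EV_comp_delta LF) comp1m. Qed.

Lemma thetaS_iff (P : contra E) x p : p \in @thetaS _ _ P x <-> @EV _ _ P (delta (idm x)) p = p.
Proof.
split.
  by move/thetaSP => [q ->]; rewrite cdot_ee EV_idem.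
by move=> H; apply/thetaSP; exists p; rewrite cdot_ee H.
Qed.

Lemma EV_in (P : contra E) x q : @EV _ _ P (delta (idm x)) q \in @thetaS _ _ P x.
Proof. by apply/thetaS_iff; rewrite EV_idem. Qed.

Lemma theta_EV (P : contra E) x (m : ThetaT P x) : @EV _ _ P (delta (idm x)) (val m) = val m.
Proof. by apply/thetaS_iff; exact: valP. Qed.

Lemma EV_delta_in (P : contra E) x y (f : Hom x y) q :
  @EV _ _ P (delta f) q \in @thetaS _ _ P y.
Proof. by apply/thetaS_iff; rewrite (EV_comp_delta LF) comp1m. Qed.

Lemma val_mact (P : contra E) x y (f : Hom x y) (m : ThetaT P x) :
  val (@mact _ _ (ThetaMod P) x y f m) = @EV _ _ P (delta f) (val m).
Proof. by rewrite /= cdot_evf insubdK //; exact: EV_delta_in. Qed.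

Lemma val_mact' (P : contra E) x y (f : Hom x y) (m : Mv (ThetaMod P) x) :
  val (@mact _ _ (ThetaMod P) x y f m : Mv (ThetaMod P) y) = @EV _ _ P (delta f) (val m).
Proof. exact: val_mact. Qed.
Lemma valDZ (P : contra E) x (u v : Mv (ThetaMod P) x) r :
  val (r *: u + v : Mv (ThetaMod P) x) = r *: val u + val v.
Proof. by []. Qed.
Lemma ThetaMod_kmod (P : contra E) : is_kmod (ThetaMod P).
Proof.
split; [|split; [|split]].
- move=> x y m r f g; apply: val_inj.
  rewrite val_mact' valDZ !val_mact' -EV_linu.
  by apply: EV_ext => a b; rewrite (@delta_lin _ E x y a b).
- move=> x y f r m n; apply: val_inj.
  by rewrite val_mact' valDZ valDZ !val_mact' (EV_lin (P := P)).
- move=> x m; apply: val_inj; by rewrite val_mact' theta_EV.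
- move=> x y z g h m; apply: val_inj; by rewrite !val_mact' (EV_comp_delta LF).
Qed.

Lemma cmorph_PI (P Q : contra E) (g : cv P -> cv Q) (Hg : is_cmorph g) (f : forall x y : Obj, C x y -> cv P) (Hf : linfam f) :
  g (@PI _ _ P f) = @PI _ _ Q (fun x y c => g (f x y c)).
Proof.
have Hl : linfam (fun x y c => g (f x y c)).
  by move=> x y r c d; rewrite (Hf x y) Hg.1.
by rewrite (PIE Hf) (Hg.2 (exist _ f Hf) Hl) -PIE.
Qed.

Lemma cmorph_EV (P Q : contra E) (g : cv P -> cv Q) (Hg : is_cmorph g) u p :
  g (@EV _ _ P u p) = @EV _ _ Q u (g p).
Proof.
rewrite /EV (cmorph_PI Hg); last exact: linfam_ev.
by apply: PI_ext => a b c; rewrite (linZ Hg.1).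
Qed.

Lemma mem_cmorph (P Q : contra E) (g : cv P -> cv Q) (Hg : is_cmorph g) x p :
  p \in @thetaS _ _ P x -> g p \in @thetaS _ _ Q x.
Proof. by move/thetaS_iff => H; apply/thetaS_iff; rewrite -(cmorph_EV Hg) H. Qed.

Lemma val_Theta_mor (P Q : contra E) (g : cv P -> cv Q) (Hg : is_cmorph g) x (p : ThetaT P x) :
  val (Theta_mor g p) = g (val p).
Proof. by rewrite /Theta_mor insubdK //; apply: (mem_cmorph Hg); exact: valP. Qed.

Lemma val_Theta_mor' (P Q : contra E) (g : cv P -> cv Q) (Hg : is_cmorph g) x (p : Mv (ThetaMod P) x) :
  val (Theta_mor g p : Mv (ThetaMod Q) x) = g (val p).
Proof. exact: val_Theta_mor. Qed.

Lemma cmorph_comp (P Q R : contra E) (g : cv P -> cv Q) (h : cv Q -> cv R) :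
  is_cmorph g -> is_cmorph h -> is_cmorph (h \o g).
Proof.
move=> Hg Hh; split; first by move=> r a b /=; rewrite Hg.1 Hh.1.
move=> F H; rewrite !cpiE /=.
have HF : linfam (fun x y c => g (sval F x y c)).
  by move=> x y r c d; rewrite (proj2_sig F x y) Hg.1.
by rewrite (cmorph_PI Hg (proj2_sig F)) (cmorph_PI Hh HF).
Qed.

Lemma Theta_functor : Theta_is_functor E.
Proof.
split; [exact: ThetaMod_kmod|split; [|split]].
- move=> P Q g Hg; split.
    move=> x r p q; apply: val_inj.
    by rewrite !(val_Theta_mor' Hg) !valDZ Hg.1 !(val_Theta_mor' Hg).
  move=> x y f m; apply: val_inj.
  by rewrite (val_Theta_mor' Hg) !val_mact' (val_Theta_mor' Hg) (cmorph_EV Hg).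
- by move=> P x p; rewrite /Theta_mor valKd.
- move=> P Q R g h Hg Hh x p; apply: val_inj.
  by rewrite (val_Theta_mor (cmorph_comp Hg Hh)) (val_Theta_mor Hh) (val_Theta_mor Hg).
Qed.


Lemma val_sumT (P : contra E) x (I : Type) (r : seq I) (F : I -> Mv (ThetaMod P) x) :
  val (\sum_(i <- r) F i : Mv (ThetaMod P) x) = \sum_(i <- r) val (F i).
Proof.
elim: r => [|i r IH]; first by rewrite !big_nil.
by rewrite !big_cons -IH.
Qed.

Lemma Theta_faithful_pf : Theta_faithful E.
Proof.
move=> P Q g1 g2 H1 H2 Heq p.
rewrite -(PI_decomp LF p) (cmorph_PI H1) ?(cmorph_PI H2); try exact: linfam_ev.
apply: PI_ext => x y c; rewrite (linZ H1.1) (linZ H2.1); congr (_ *: _).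
have := Heq x (exist (fun q => q \in @thetaS _ _ P x) _ (EV_in x p)); move/(congr1 val).
by rewrite !val_Theta_mor.
Qed.

Lemma Theta_full_pf : Theta_full E.
Proof.
move=> P Q eta [Hlin Hcomm].
pose tP x (p : cv P) : ThetaT P x := insubd 0 (@EV _ _ P (delta (idm x)) p).
have val_tP : forall x p, val (tP x p) = @EV _ _ P (delta (idm x)) p.
  by move=> x p; rewrite /tP insubdK //; exact: EV_in.
pose g (p : cv P) : cv Q :=
  PI (fun x y (c : C x y) => (c (delta (idm x) x y) : k) *: val (eta x (tP x p))).
have tP_lin : forall x, linear (tP x).
  move=> x r p q; apply: val_inj; by rewrite val_tP valDZ !val_tP EV_lin.
have g_lin : linear g.
  move=> r p q; rewrite /g -PI_lin; try exact: linfam_ev.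
  apply: PI_ext => x y c; rewrite (tP_lin x) (Hlin x) valDZ.
  by rewrite scalerDr !scalerA mulrC.
have g_e : forall x (p : ThetaT P x), g (val p) = val (eta x p).
  move=> x p; rewrite /g -[RHS](theta_EV (eta x p)); apply: PI_ext => y b c.
  case: (classic (y = x)) => [ey|ny].
    subst y; congr (_ *: val (eta x _)); apply: val_inj; by rewrite val_tP theta_EV.
  have -> : tP y (val p) = 0.
    apply: val_inj; rewrite val_tP -(theta_EV p) EV_comp_delta0 //.
    exact: nesym.
  by rewrite (lin0 (Hlin y)) (delta0l _ _ (nesym ny)) !linear0 ?scale0r ?scaler0.
have e_g : forall a q, @EV _ _ Q (delta (idm a)) (g q) = val (eta a (tP a q)).
  by move=> a q; rewrite /g (EV_diag LF) theta_EV.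
have g_cm : is_cmorph g.
  split => // F H; rewrite !cpiE /=.
  set f := sval F; have Hf : linfam f := proj2_sig F.
  have Hgf : linfam (fun x y c => g (f x y c)).
    by move=> x y r c d; rewrite (Hf x y) g_lin.
  rewrite -[RHS](PI_decomp LF) {1}/g; apply: PI_ext => x y c; congr (_ *: _).
  rewrite (PI_restrict LF Hgf x).
  have -> : tP x (PI f) = \sum_(a <- predl LF x) \sum_(i < \dim (fullv : {vspace Hom a x}))
      @mact _ _ (ThetaMod P) a x (bvec i) (tP a (f a x (dualb i))).
    apply: val_inj; rewrite val_tP (PI_restrict LF Hf x) val_sumT.
    apply: eq_bigr => a _; rewrite val_sumT; apply: eq_bigr => i _.
    by rewrite val_mact' val_tP (EV_comp_delta LF) compm1.
  rewrite (lin_sum (Hlin x)) val_sumT; apply: eq_bigr => a _.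
  rewrite (lin_sum (Hlin x)) val_sumT; apply: eq_bigr => i _.
  rewrite Hcomm val_mact' -e_g (EV_comp_delta LF) compm1 //.
exists g; split => // x p; apply: val_inj.
by rewrite (val_Theta_mor g_cm) g_e.
Qed.

End ThetaProps.


Definition PT (k : fieldType) (E : kcat k) (M : kmod E) := forall x : Obj E, Mv M x.

HB.instance Definition _ (k : fieldType) (E : kcat k) (M : kmod E) := boolp.gen_eqMixin (PT M).
HB.instance Definition _ (k : fieldType) (E : kcat k) (M : kmod E) := boolp.gen_choiceMixin (PT M).

Section PTdef.
Variables (k : fieldType) (E : kcat k) (M : kmod E).
Definition PTadd (f g : PT M) : PT M := fun x => f x + g x.
Definition PTzero : PT M := fun x => 0.
Definition PTopp (f : PT M) : PT M := fun x => - f x.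
Definition PTscale (r : k) (f : PT M) : PT M := fun x => r *: f x.
Lemma PTaddA : associative PTadd.
Proof. by move=> f g h; apply: functional_extensionality_dep => x; rewrite /PTadd addrA. Qed.
Lemma PTaddC : commutative PTadd.
Proof. by move=> f g; apply: functional_extensionality_dep => x; rewrite /PTadd addrC. Qed.
Lemma PTadd0 : left_id PTzero PTadd.
Proof. by move=> f; apply: functional_extensionality_dep => x; rewrite /PTadd /PTzero add0r. Qed.
Lemma PTaddN : left_inverse PTzero PTopp PTadd.
Proof. by move=> f; apply: functional_extensionality_dep => x; rewrite /PTadd /PTopp /PTzero addNr. Qed.
End PTdef.

HB.instance Definition _ (k : fieldType) (E : kcat k) (M : kmod E) :=
  GRing.isZmodule.Build (PT M) (@PTaddA _ _ M) (@PTaddC _ _ M) (@PTadd0 _ _ M) (@PTaddN _ _ M).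

Section PTdef2.
Variables (k : fieldType) (E : kcat k) (M : kmod E).
Lemma PTscaleA a b (v : PT M) : PTscale a (PTscale b v) = PTscale (a * b) v.
Proof. by apply: functional_extensionality_dep => x; rewrite /PTscale scalerA. Qed.
Lemma PTscale1 : left_id 1 (@PTscale _ _ M).
Proof. by move=> v; apply: functional_extensionality_dep => x; rewrite /PTscale scale1r. Qed.
Lemma PTscaleDr : right_distributive (@PTscale _ _ M) +%R.
Proof. by move=> a u v; apply: functional_extensionality_dep => x; rewrite /PTscale scalerDr. Qed.
Lemma PTscaleDl (v : PT M) : {morph (@PTscale _ _ M)^~ v : a b / a + b}.
Proof. by move=> a b; apply: functional_extensionality_dep => x; rewrite /PTscale scalerDl. Qed.
End PTdef2.

HB.instance Definition _ (k : fieldType) (E : kcat k) (M : kmod E) :=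
  GRing.Zmodule_isLmodule.Build k (PT M) (@PTscaleA _ _ M) (@PTscale1 _ _ M) (@PTscaleDr _ _ M) (@PTscaleDl _ _ M).

Section PTlem.
Variables (k : fieldType) (E : kcat k) (M : kmod E).
Lemma PT_addE (f g : PT M) x : (f + g) x = f x + g x. Proof. by []. Qed.
Lemma PT_scaleE r (f : PT M) x : (r *: f) x = r *: f x. Proof. by []. Qed.
Lemma PT_zeroE x : (0 : PT M) x = 0. Proof. by []. Qed.
Lemma PT_sumE (I : Type) (r : seq I) (F : I -> PT M) x :
  (\sum_(i <- r) F i) x = \sum_(i <- r) F i x.
Proof. elim: r => [|i r IH]; first by rewrite !big_nil. by rewrite !big_cons PT_addE IH. Qed.
End PTlem.


Lemma sum_nodup_eq (T : Type) (V : nmodType) (L1 L2 : seq T) (F : T -> V) :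
  List.NoDup L1 -> List.NoDup L2 -> (forall x, List.In x L1 <-> List.In x L2) ->
  \sum_(x <- L1) F x = \sum_(x <- L2) F x.
Proof.
elim: L1 L2 => [|a L1 IH] L2 N1 N2 H.
  case: L2 N2 H => [|b L2] // _ H; by have := (H b).2 (or_introl erefl).
have : List.In a L2 by apply/H; left.
move=> Ha; have [l1 [l2 e]] := List.in_split _ _ Ha; subst L2.
inversion N1; subst.
rewrite big_cons big_cat big_cons /= addrCA -big_cat; congr (_ + _).
apply: IH => //; first exact: List.NoDup_remove_1 N2.
move=> x; split => Hx.
  have : List.In x (l1 ++ a :: l2) by apply/H; right.
  rewrite !List.in_app_iff /= => -[|[e|]]; auto; by subst.
have nx : x <> a.
  move=> e; subst; apply: (List.NoDup_remove_2 _ _ _ N2) => //.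
have : List.In x (a :: L1) by apply/H; move: Hx; rewrite !List.in_app_iff /=; tauto.
by case=> // e; case: nx.
Qed.

Section Pairs.
Variables (T X : Type) (f : T -> T -> X)
  (finj : forall a b a' b', f a b = f a' b' -> a = a' /\ b = b').

Lemma map_In (a : T) (s : seq T) b : List.In (f a b) [seq f a y | y <- s] <-> List.In b s.
Proof.
elim: s => [|y s IH] //=; split.
  by case=> [/finj [_ ->]|/IH]; auto.
by case=> [->|/IH]; auto.
Qed.

Lemma map_In_inv (a : T) (s : seq T) z : List.In z [seq f a y | y <- s] -> exists b, z = f a b.
Proof. elim: s => [|y s IH] //= H; case: H => [<-|/IH //]; by exists y. Qed.

Lemma map_NoDup (a : T) (s : seq T) : List.NoDup s -> List.NoDup [seq f a y | y <- s].
Proof.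
elim: s => [|y s IH] /= N; first constructor.
inversion N; subst; constructor; last exact: IH.
by move/map_In.
Qed.

Lemma allpairs_In (A : seq T) (B : T -> seq T) a b :
  List.In (f a b) [seq f x y | x <- A, y <- B x] <-> List.In a A /\ List.In b (B a).
Proof.
elim: A => [|a0 A IH] /=; first by split => // -[].
split.
  move=> Hin; case: (List.in_app_or _ _ _ Hin) => [H|/IH [H1 H2]]; last by split; [right|].
  have [b' e] := map_In_inv H; have [ea eb] := finj e; subst.
  split; [by left|]; exact: (proj1 (map_In _ _ _) H).
case=> [[ea|HA] HB]; apply: List.in_or_app; last by right; apply/IH.
by subst; left; exact: (proj2 (map_In _ _ _) HB).
Qed.

Lemma allpairs_In_inv (A : seq T) (B : T -> seq T) z :
  List.In z [seq f x y | x <- A, y <- B x] -> exists a b, z = f a b.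
Proof.
elim: A => [|a0 A IH] //=; rewrite List.in_app_iff => -[|/IH //].
by move/map_In_inv => [b ->]; exists a0, b.
Qed.

Lemma allpairs_NoDup (A : seq T) (B : T -> seq T) :
  List.NoDup A -> (forall a, List.NoDup (B a)) -> List.NoDup [seq f x y | x <- A, y <- B x].
Proof.
elim: A => [|a0 A IH] /= NA NB; first constructor.
inversion NA; subst.
apply: List.NoDup_app; [exact: map_NoDup|exact: IH|].
move=> z Hz1 Hz2; have [b e] := map_In_inv Hz1; subst.
by move/allpairs_In: Hz2 => [].
Qed.
End Pairs.

Lemma double_sum_swap (T : Type) (V : nmodType) (A : seq T) (B : T -> seq T)
    (A' : seq T) (B' : T -> seq T) (G : T -> T -> V) :
  List.NoDup A -> (forall a, List.NoDup (B a)) -> List.NoDup A' -> (forall b, List.NoDup (B' b)) ->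
  (forall a b, (List.In a A /\ List.In b (B a)) <-> (List.In b A' /\ List.In a (B' b))) ->
  \sum_(a <- A) \sum_(b <- B a) G a b = \sum_(b <- A') \sum_(a <- B' b) G a b.
Proof.
move=> NA NB NA' NB' H.
have inj1 : forall a b a' b' : T, (a, b) = (a', b') -> a = a' /\ b = b' by move=> ? ? ? ? [-> ->].
have inj2 : forall a b a' b' : T, (b, a) = (b', a') -> a = a' /\ b = b' by move=> ? ? ? ? [-> ->].
have E1 : \sum_(a <- A) \sum_(b <- B a) G a b =
    \sum_(p <- [seq ((a, b) : T * T) | a <- A, b <- B a]) G p.1 p.2 by rewrite big_allpairs_dep.
have E2 : \sum_(b <- A') \sum_(a <- B' b) G a b =
    \sum_(p <- [seq ((a, b) : T * T) | b <- A', a <- B' b]) G p.1 p.2 by rewrite big_allpairs_dep.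
rewrite E1 E2.
apply: sum_nodup_eq; [exact: allpairs_NoDup|exact: (allpairs_NoDup inj2)|].
move=> [a b]; rewrite (allpairs_In inj1) (allpairs_In (f := fun b a => (a, b)) inj2); exact: H.
Qed.


Section Ess.
Variables (k : fieldType) (E : kcat k).
Local Notation Obj := (Obj E).
Local Notation Hom := (@Defs.Hom _ E).
Local Notation C := (@Defs.C _ E).
Hypothesis LF : lower_finite E.
Variable M : kmod E.
Hypothesis HM : is_kmod M.

Lemma Mlf (x y : Obj) (m : Mv M x) : linear (fun f : Hom x y => mact f m).
Proof. exact: HM.1. Qed.
Lemma Ml (x y : Obj) (f : Hom x y) : linear (@mact _ _ M x y f).
Proof. exact: HM.2.1. Qed.
Lemma Mid (x : Obj) (m : Mv M x) : mact (idm x) m = m.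
Proof. exact: HM.2.2.1. Qed.
Lemma Mc (x y z : Obj) (g : Hom x y) (h : Hom y z) (m : Mv M x) :
  mact (comp h g) m = mact h (mact g m).
Proof. exact: HM.2.2.2. Qed.

Lemma act_expand (x y : Obj) (f : Hom x y) (m : Mv M x) :
  mact f m = \sum_i (dualb i f : k) *: mact (bvec i : Hom x y) m.
Proof.
rewrite {1}(bexp f) (lin_sum (Mlf m)); apply: eq_bigr => i _.
by rewrite (linZ (Mlf m)).
Qed.

Definition piM (F : LinFam E (PT M)) : PT M := fun y =>
  \sum_(x <- predl LF y) \sum_(i < \dim (fullv : {vspace Hom x y}))
     mact (bvec i : Hom x y) (sval F x y (dualb i) x).

Lemma piM_lin (a : k) (F G : LinFam E (PT M))
    (H : linfam (fun x y c => a *: sval F x y c + sval G x y c)) :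
  piM (exist _ _ H) = a *: piM F + piM G.
Proof.
apply: functional_extensionality_dep => y.
rewrite PT_addE PT_scaleE /piM /= scaler_sumr -big_split; apply: eq_bigr => x _.
rewrite scaler_sumr -big_split; apply: eq_bigr => i _.
by rewrite PT_addE PT_scaleE (Ml (bvec i)).
Qed.

Lemma piM_counit (p : PT M) : cdot piM (eps E) p = p.
Proof.
apply: functional_extensionality_dep => y; rewrite /cdot /piM /=.
have [ND Hin] := predl_spec LF y.
rewrite (sum_single (z0 := y)) //; last 2 first.
- by apply/Hin; exact: prec_refl.
- move=> x nx; apply: sum_zero => i _.
  by rewrite PT_scaleE (delta0r _ _ nx) linear0 scale0r (lin0 (Ml _)).
rewrite deltaE -[RHS]Mid [RHS]act_expand; apply: eq_bigr => i _.
by rewrite PT_scaleE (linZ (Ml _)).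
Qed.

Lemma fmu_eval (F : forall x y, C x y -> forall a b, C a b -> PT M) (w y : Obj) (phi : C w y) (x : Obj) :
  (fmu F phi) x = \sum_(z <- interval w y) \sum_(i < \dim (fullv : {vspace Hom w z}))
     \sum_(j < \dim (fullv : {vspace Hom z y}))
       (phi (comp (bvec j) (bvec i)) : k) *: F z y (dualb j) w z (dualb i) x.
Proof.
rewrite /fmu PT_sumE; apply: eq_bigr => z _; rewrite PT_sumE; apply: eq_bigr => i _.
rewrite PT_sumE; apply: eq_bigr => j _; by rewrite PT_scaleE.
Qed.

Lemma piM_assoc (F : forall x y, C x y -> forall a b, C a b -> PT M)
    (HF1 : forall x y c, linfam (F x y c))
    (H2 : linfam (fun x y c => piM (exist _ _ (HF1 x y c))))
    (H3 : linfam (fmu F)) :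
  piM (exist _ _ H2) = piM (exist _ _ H3).
Proof.
apply: functional_extensionality_dep => y.
pose G (z w : Obj) := \sum_(j < \dim (fullv : {vspace Hom z y}))
   \sum_(i < \dim (fullv : {vspace Hom w z}))
     mact (comp (bvec j) (bvec i)) (F z y (dualb j) w z (dualb i) w).
transitivity (\sum_(z <- predl LF y) \sum_(w <- predl LF z) G z w).
  rewrite /piM /=; apply: eq_bigr => z _.
  transitivity (\sum_(j < \dim (fullv : {vspace Hom z y})) \sum_(w <- predl LF z)
     \sum_(i < \dim (fullv : {vspace Hom w z}))
     mact (comp (bvec j) (bvec i)) (F z y (dualb j) w z (dualb i) w)).
    apply: eq_bigr => j _; rewrite (lin_sum (Ml _)); apply: eq_bigr => w _.
    rewrite (lin_sum (Ml _)); apply: eq_bigr => i _; by rewrite Mc.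
  by rewrite exchange_big.
transitivity (\sum_(w <- predl LF y) \sum_(z <- interval w y) G z w); last first.
  rewrite /piM /=; apply: esym; apply: eq_bigr => w _.
  under eq_bigr => l _ do rewrite fmu_eval.
  transitivity (\sum_(l < \dim (fullv : {vspace Hom w y})) \sum_(z <- interval w y)
     \sum_(i < \dim (fullv : {vspace Hom w z})) \sum_(j < \dim (fullv : {vspace Hom z y}))
       (dualb l (comp (bvec j) (bvec i)) : k) *: mact (bvec l : Hom w y) (F z y (dualb j) w z (dualb i) w)).
    apply: eq_bigr => l _; rewrite (lin_sum (Ml _)); apply: eq_bigr => z _.
    rewrite (lin_sum (Ml _)); apply: eq_bigr => i _.
    rewrite (lin_sum (Ml _)); apply: eq_bigr => j _; by rewrite (linZ (Ml _)).
  rewrite exchange_big; apply: eq_bigr => z _.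
  rewrite /G [RHS]exchange_big /= exchange_big; apply: eq_bigr => i _.
  rewrite exchange_big; apply: eq_bigr => j _.
  by rewrite [RHS]act_expand.
have [NDy Hy] := predl_spec LF y.
apply: double_sum_swap => //.
- by move=> a; have [] := predl_spec LF a.
- by move=> b; have [] := interval_spec LF b y.
move=> z w; have [_ Hz] := predl_spec LF z; have [_ Hw] := interval_spec LF w y.
rewrite Hy Hz Hy Hw; split.
  by move=> [Hzy Hwz]; split; [exact: prec_trans Hwz Hzy|].
by move=> [_ [Hwz Hzy]].
Qed.

End Ess.


Section Ess2.
Variables (k : fieldType) (E : kcat k).
Local Notation Obj := (Obj E).
Local Notation Hom := (@Defs.Hom _ E).
Local Notation C := (@Defs.C _ E).
Hypothesis LF : lower_finite E.
Variable M : kmod E.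
Hypothesis HM : is_kmod M.

Lemma PM_ax : is_contra (@piM _ _ LF M).
Proof.
split; [exact: piM_lin|split; [exact: piM_counit|]].
move=> F HF1 HF2 H2 H3; exact: piM_assoc.
Qed.

Definition PMc : contra E := @Contra _ E (PT M : lmodType k) (@piM _ _ LF M) PM_ax.

Lemma EVM_at (x y : Obj) (f : Hom x y) (q : PT M) :
  (@EV _ _ PMc (delta f) q : PT M) y = mact f (q x).
Proof.
rewrite /EV (PIE (linfam_ev (P := PMc) _ _)) /= /piM /=.
have [ND Hin] := predl_spec LF y.
case: (classic (prec x y)) => [Hp|Hnp]; last first.
  have f0 : f = 0 by apply: NNPP => /eqP nf; apply: Hnp; exact: hom_prec nf.
  subst f; rewrite (lin0 (Mlf HM _)) sum_zero // => a _; apply: sum_zero => i _.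
  by rewrite delta_zero linear0 PT_scaleE scale0r (lin0 (Ml HM _)).
rewrite (sum_single (z0 := x)) //; last 2 first.
- exact/Hin.
- move=> a na; apply: sum_zero => i _.
  by rewrite (delta0l _ _ (nesym na)) linear0 PT_scaleE scale0r (lin0 (Ml HM _)).
rewrite deltaE [RHS](act_expand HM); apply: eq_bigr => i _.
by rewrite PT_scaleE (linZ (Ml HM _)).
Qed.

Lemma EVM_off (x y : Obj) (f : Hom x y) (q : PT M) b :
  y <> b -> (@EV _ _ PMc (delta f) q : PT M) b = 0.
Proof.
move=> nb; rewrite /EV (PIE (linfam_ev (P := PMc) _ _)) /= /piM /=.
apply: sum_zero => a _; apply: sum_zero => i _.
by rewrite (delta0r _ _ nb) linear0 PT_scaleE scale0r (lin0 (Ml HM _)).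
Qed.

Definition dl (x : Obj) (m : Mv M x) : PT M := fun y =>
  match excluded_middle_informative (x = y) with
  | left e => eq_rect x (Mv M) m y e
  | right _ => 0 end.

Lemma dl_at x (m : Mv M x) : dl m x = m.
Proof.
rewrite /dl; case: excluded_middle_informative => [e|[]] //.
by rewrite (proof_irrelevance _ e erefl).
Qed.

Lemma dl_off x (m : Mv M x) y : x <> y -> dl m y = 0.
Proof. by rewrite /dl; case: excluded_middle_informative. Qed.

Lemma dl_lin x : linear (@dl x).
Proof.
move=> r m n; apply: functional_extensionality_dep => y.
rewrite PT_addE PT_scaleE.
case: (classic (x = y)) => [e|ne]; first by subst y; rewrite !dl_at.
by rewrite !dl_off // scaler0 addr0.
Qed.

Lemma dl_in x (m : Mv M x) : dl m \in @thetaS _ _ PMc x.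
Proof.
apply/(thetaS_iff LF); apply: functional_extensionality_dep => b.
case: (classic (x = b)) => [e|ne].
  by subst b; rewrite EVM_at dl_at (Mid HM).
by rewrite EVM_off // dl_off.
Qed.

Lemma ess_surj_pf : exists (P : contra E) (eta : forall x, ThetaT P x -> Mv M x)
           (zeta : forall x, Mv M x -> ThetaT P x),
      @is_kmorph _ _ (ThetaMod P) M eta /\ @is_kmorph _ _ M (ThetaMod P) zeta /\
      (forall x p, zeta x (eta x p) = p) /\ (forall x m, eta x (zeta x m) = m).
Proof.
pose eta x (p : ThetaT PMc x) : Mv M x := (val p : PT M) x.
pose zeta x (m : Mv M x) : ThetaT PMc x := insubd (0 : ThetaT PMc x) (dl m).
have val_zeta : forall x m, val (zeta x m) = dl m.
  by move=> x m; rewrite /zeta insubdK //; exact: dl_in.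
exists PMc, eta, zeta; split; [|split; [|split]].
- split; first by move=> x r p q.
  move=> x y f m; rewrite /eta.
  have H := val_mact' LF f m.
  rewrite H. by rewrite EVM_at.
- split.
    move=> x r m n; apply: val_inj.
    by rewrite (valDZ (P := PMc)) !val_zeta dl_lin.
  move=> x y f m; apply: val_inj.
  rewrite (val_mact' LF) !val_zeta; apply: functional_extensionality_dep => b.
  case: (classic (y = b)) => [e|ne].
    by subst b; rewrite EVM_at !dl_at.
  by rewrite EVM_off // dl_off.
- move=> x p; apply: val_inj; rewrite val_zeta; apply: functional_extensionality_dep => b.
  case: (classic (x = b)) => [e|ne]; first by subst b; rewrite dl_at.
  by rewrite dl_off // -(theta_EV LF p) EVM_off.
- by move=> x m; rewrite /eta val_zeta dl_at.
Qed.

End Ess2.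

Theorem proposition7p5 (k : fieldType) (E : kcat k) :
  lower_finite E -> Theta_equivalence E.
Proof.
move=> LF; split; first exact: Theta_functor LF.
split; first exact: Theta_faithful_pf LF.
split; first exact: Theta_full_pf LF.
move=> M HM; exact: (@ess_surj_pf _ _ LF M HM).
Qed.
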